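(* Let $p>2$ be prime, $u\in\mathbb{F}_p^*$ a non-square, $T'=\{\begin{pmatrix}a&bu\\ b&a\end{pmatrix}: a,b\in\mathbb{F}_p,\ a^2-ub^2\neq 0\}\subset {\rm GL}_2(\mathbb{F}_p)$, $Z$ the subgroup of scalar matrices, and $w=\begin{pmatrix}0&-1\\1&0\end{pmatrix}$. Then in the group ring $\mathbb{Q}[{\rm PGL}_2(\mathbb{F}_p)]$ the $T'$-trace element $\sum_{M\in T'/Z}M$ is equal to $${\rm id}+\sum_{r\in\mathbb{F}_p}\begin{pmatrix}1&r\\0&1\end{pmatrix}w\begin{pmatrix}1&r\\0&r^2-u\end{pmatrix}.$$
   Context: Matrices are viewed via their images in ${\rm PGL}_2(\mathbb{F}_p)={\rm GL}_2(\mathbb{F}_p)/Z$. *)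

(* Defs.v *)
From HB Require Import structures.
From mathcomp Require Import all_boot all_order all_algebra all_fingroup.
Set Implicit Arguments. Unset Strict Implicit. Unset Printing Implicit Defensive.
Import GRing.Theory.
Local Open Scope ring_scope.

Definition mx2 (R : Type) (a b c d : R) : 'M[R]_2 :=
  \matrix_(i < 2, j < 2)
    if (i : nat) == 0%N then (if (j : nat) == 0%N then a else b)
    else (if (j : nat) == 0%N then c else d).

(* An (invertible) 2x2 matrix viewed as an element of GL_2(F_p); the default 1
   is only used for non-invertible input, which never occurs below. *)
Definition toGL (p : nat) (A : 'M['F_p]_2) : {'GL_2['F_p]} := @insubd _ _ {'GL_2['F_p]} (1%g : {'GL_2['F_p]}) A.

Definition Zsc (p : nat) : {set {'GL_2['F_p]}} :=
  [set g : {'GL_2['F_p]} | is_scalar_mx (GLval g)].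

Definition PGL2 (p : nat) := coset_of (Zsc p).

Definition pgl (p : nat) (g : {'GL_2['F_p]}) : PGL2 p := coset (Zsc p) g.

Definition Tprime (p : nat) (u : 'F_p) : {set {'GL_2['F_p]}} :=
  [set g : {'GL_2['F_p]} | [exists a : 'F_p, exists b : 'F_p,
      GLval g == mx2 a (b * u) b a]].

(* Group ring Q[G] of a finite group: formal Q-linear combinations,
   i.e. finitely supported functions G -> Q (with pointwise addition). *)
Definition grpring (G : finType) := {ffun G -> rat}.

Definition gr (G : finType) (g : G) : grpring G := [ffun x => (x == g)%:R].

(* Main.v *)
Require Import Defs.
From HB Require Import structures.
From mathcomp Require Import all_boot all_order all_algebra all_fingroup.
From mathcomp Require Import ring.
Import GRing.Theory.
Local Open Scope ring_scope.

Lemma mx2_mul (R : comNzRingType) (a b c d a' b' c' d' : R) :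
  mx2 a b c d *m mx2 a' b' c' d' =
  mx2 (a * a' + b * c') (a * b' + b * d') (c * a' + d * c') (c * b' + d * d').
Proof.
apply/matrixP => i j; rewrite !mxE !big_ord_recl big_ord0 !mxE /=.
by case: i => [[|[|i]] Hi]; case: j => [[|[|j]] Hj] //=; rewrite ?addr0 ?add0r.
Qed.

Lemma mx2_scale (R : comNzRingType) (k a b c d : R) :
  k *: mx2 a b c d = mx2 (k * a) (k * b) (k * c) (k * d).
Proof.
apply/matrixP => i j; rewrite !mxE.
by case: i => [[|[|i]] Hi]; case: j => [[|[|j]] Hj] //=; rewrite ?addr0 ?add0r.
Qed.

Lemma mx2_scalar (R : comNzRingType) (k : R) : k%:M = mx2 k 0 0 k.
Proof.
apply/matrixP => i j; rewrite !mxE.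
by case: i => [[|[|i]] Hi]; case: j => [[|[|j]] Hj] //=; rewrite ?addr0 ?add0r.
Qed.

Lemma mx2_unit (F : fieldType) (a b c d : F) : a * d - b * c != 0 ->
  mx2 a b c d \in unitmx.
Proof.
move=> nz.
have := @mulmx1_unit _ _ (mx2 a b c d) ((a * d - b * c)^-1 *: mx2 d (-b) (-c) a).
case=> // ; rewrite -scalemxAr mx2_mul mx2_scale mx2_scalar.
congr mx2; field => //.
Qed.

Lemma mx2_eq (R : Type) (a b c d a' b' c' d' : R) :
  mx2 a b c d = mx2 a' b' c' d' -> [/\ a = a', b = b', c = c' & d = d'].
Proof.
move=> /matrixP e.
have := e 0 0; have := e 0 1; have := e 1 0; have := e 1 1.
by rewrite !mxE /=.
Qed.
Arguments mx2_eq {R a b c d a' b' c' d'}.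

Section P.
Variable p : nat.
Local Notation GL := {'GL_2['F_p]}.

Lemma Zsc_group : group_set (Zsc p).
Proof.
apply/group_setP; split; first by rewrite inE GL_1E; apply/is_scalar_mxP; exists 1.
move=> x y; rewrite !inE => /is_scalar_mxP[a ea] /is_scalar_mxP[b eb].
by apply/is_scalar_mxP; exists (a * b)%R; rewrite GL_MxE ea eb -scalar_mxM.
Qed.

Canonical Zg := Group Zsc_group.

Lemma Zsc_norm (x : GL) : x \in 'N(Zsc p)%g.
Proof.
apply: (subsetP (cent_sub _)); apply/centP => y; rewrite inE => /is_scalar_mxP[a ea].
apply: val_inj; change (GLval x *m GLval y = GLval y *m GLval x); by rewrite ea scalar_mxC.
Qed.

Lemma coset_scal (x y : GL) (a : 'F_p) : GLval x = a%:M *m GLval y ->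
  coset (Zsc p) x = coset (Zsc p) y.
Proof.
move=> e.
have -> : x = ((x * y^-1) * y)%g by rewrite -mulgA mulVg mulg1.
apply: (@coset_kerl _ Zg).
rewrite inE; apply/is_scalar_mxP; exists a.
by rewrite GL_MxE GL_VxE e -mulmxA mulmxV ?mulmx1 // GL_unitmx.
Qed.

Lemma coset_scal_inv (x y : GL) : coset (Zsc p) x = coset (Zsc p) y ->
  exists a : 'F_p, GLval x = a%:M *m GLval y.
Proof.
move=> e.
have : (x * y^-1)%g \in Zsc p.
  apply: (@coset_idr _ Zg); first exact: Zsc_norm.
  by rewrite morphM ?Zsc_norm //= morphV ?Zsc_norm //= e mulgV.
rewrite inE => /is_scalar_mxP[a ea]; exists a.
by rewrite -ea -GL_MxE mulgKV.
Qed.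

Lemma toGLK (A : 'M['F_p]_2) : A \in unitmx -> GLval (toGL A) = A.
Proof. by move=> uA; rewrite /toGL val_insubd /= uA. Qed.

Lemma toGL3 (A B C : 'M['F_p]_2) : A \in unitmx -> B \in unitmx -> C \in unitmx ->
  GLval (toGL A * toGL B * toGL C)%g = A *m B *m C.
Proof. by move=> uA uB uC; rewrite !GL_MxE !toGLK. Qed.

End P.

Theorem proposition2p2 (p : nat) (u : 'F_p) :
  prime p -> (2 < p)%N ->
  u != 0 -> ~~ [exists v : 'F_p, v ^+ 2 == u] ->
  \sum_(C in (Tprime u / Zsc p)%g) gr C
  = gr (1%g : PGL2 p) +
    \sum_(r : 'F_p)
      gr (pgl (toGL (mx2 1 r 0 1)%R * toGL (mx2 0 (-1) 1 0)%R
               * toGL (mx2 1 r 0 (r ^+ 2 - u))%R)%g).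
Proof.
move=> pp p2 u0 nsq.
have [f fdef] : exists f : 'F_p -> {'GL_2['F_p]}, f = fun r : 'F_p => (toGL (mx2 1 r 0 1)%R * toGL (mx2 0 (-1) 1 0)%R
               * toGL (mx2 1 r 0 (r ^+ 2 - u))%R)%g by eexists.
have nz r : r ^+ 2 - u != 0.
  apply: contra nsq; rewrite subr_eq0 => /eqP e; apply/existsP; exists r; by rewrite e.
have fE r : GLval (f r) = mx2 r u 1 r.
  rewrite fdef toGL3; last 3 first.
  - by apply: mx2_unit; rewrite ?mulr0 ?mul0r ?subr0 ?mul1r ?mulr1 ?mulN1r ?opprK ?add0r ?oner_neq0 ?nz.
  - by apply: mx2_unit; rewrite ?mulr0 ?mul0r ?subr0 ?mul1r ?mulr1 ?mulN1r ?opprK ?add0r ?oner_neq0 ?nz.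
  - by apply: mx2_unit; rewrite ?mulr0 ?mul0r ?subr0 ?mul1r ?mulr1 ?mulN1r ?opprK ?add0r ?oner_neq0 ?nz.
  rewrite !mx2_mul !(mulr0, mul0r, mulr1, mul1r, addr0, add0r).
  by rewrite mulN1r opprB -expr2 addrC subrK.
have fnot1 r : pgl (f r) != 1%g.
  apply/eqP => e.
  have := (@coset_idr _ (Zg p) (f r) (@Zsc_norm p (f r)) e).
  rewrite inE fE => /is_scalar_mxP[a]; rewrite mx2_scalar => eA; have [_ _ e1 _] := mx2_eq eA.
  by move: (oner_neq0 'F_p); rewrite e1 eqxx.
have finj : injective (fun r => pgl (f r)).
  move=> r s e; have [a] := @coset_scal_inv p (f r) (f s) e.
  rewrite (fE r) (fE s) mul_scalar_mx mx2_scale.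
  by move=> eA; have [-> _ e1 _] := mx2_eq eA; move: e1; rewrite mulr1 => <-; rewrite mul1r.
have TN : Tprime u \subset 'N(Zsc p)%g by apply/subsetP => x _; exact: Zsc_norm.
have SE : (Tprime u / Zsc p)%g = 1%g |: [set pgl (f r) | r : 'F_p].
  rewrite quotientE morphimEsub //=.
  apply/setP => C; apply/imsetP/setU1P.
  - case=> g; rewrite inE => /existsP[a /existsP[b /eqP eg]] ->.
    have [b0|bn0] := eqVneq b 0.
      left; apply: coset_id; rewrite inE eg b0 mul0r -mx2_scalar; apply/is_scalar_mxP; by exists a.
    right; apply/imsetP; exists (a / b) => //.
    apply: (@coset_scal p _ _ b); rewrite eg fE mul_scalar_mx mx2_scale.
    by rewrite mulr1 [b * (a / b)]mulrC divfK.
  - case=> [->|/imsetP[r _ ->]].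
      exists 1%g; last by rewrite morph1.
      rewrite inE; apply/existsP; exists 1; apply/existsP; exists 0.
      by rewrite mul0r -mx2_scalar GL_1E.
    exists (f r) => //; rewrite inE; apply/existsP; exists r; apply/existsP; exists 1.
    by rewrite fE mul1r.
rewrite SE big_setU1 /=; last first.
  by apply/imsetP => -[r _ e]; move: (fnot1 r); rewrite -e eqxx.
rewrite big_imset /=; last by move=> r s _ _; apply: finj.
by rewrite fdef.
Qed.
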